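(* Let $L$ be a finite loop and let $Z_2 = \{0,1\}$ be the Boolean near-ring with addition modulo $2$ and multiplication $a\cdot b = a$ for all $a,b\in Z_2$. Then the near loop ring $Z_2L$ has a subnear-ring $S \neq \{0\}$ which is a Boolean near-ring (i.e. $x\cdot x = x$ for all $x \in S$).
   Context: A loop is a set $L$ with a binary operation (written multiplicatively) and an identity $e$ such that for all $a,b \in L$ the equations $ax = b$ and $ya = b$ have unique solutions $x, y\in L$. The near loop ring $Z_2L$ consists of all formal sums $\sum_{m \in L} \alpha(m) m$ with $\alpha(m) \in Z_2$; addition is coefficientwise, and the product of $\alpha = \sum_{m \in \operatorname{supp}\alpha} \alpha(m) m$ and $\beta = \sum_{k \in \operatorname{supp}\beta} \beta(k) k$ (where $\operatorname{supp}$ denotes the set of loop elements with nonzero coefficient) is $\sum_{m \in \operatorname{supp}\alpha,\, k\in\operatorname{supp}\beta} (\alpha(m)\cdot\beta(k))\, mk$, like terms being collected by addition in $Z_2$; the element $1\cdot e$ is identified with $1$. A subnear-ring is a subset that is a subgroup under addition and closed under multiplication. *)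

(* Defs.v *)
From mathcomp Require Import all_boot.
Set Implicit Arguments. Unset Strict Implicit. Unset Printing Implicit Defensive.

Definition is_loop (T : Type) (op : T -> T -> T) (e : T) : Prop :=
  (forall a, op e a = a /\ op a e = a) /\
  (forall a b, exists! x, op a x = b) /\
  (forall a b, exists! y, op y a = b).

Definition z2add (a b : bool) : bool := a (+) b.
Definition z2mul (a b : bool) : bool := a.

Section NearLoopRing.
Variables (T : finType) (op : T -> T -> T).

(* Elements of the near loop ring Z_2 L: formal sums, i.e. coefficient
   functions L -> Z_2. *)
Definition nlr := {ffun T -> bool}.

Definition nlr0 : nlr := [ffun _ => false].

Definition nlr_add (a b : nlr) : nlr := [ffun m => z2add (a m) (b m)].

Definition nlr_opp (a : nlr) : nlr := [ffun m => a m].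

(* product: sum over m in supp a, k in supp b of (a(m).b(k)) mk,
   like terms collected by addition in Z_2 *)
Definition nlr_mul (a b : nlr) : nlr :=
  [ffun t => \big[z2add/false]_(m | a m) \big[z2add/false]_(k | b k)
               (z2mul (a m) (b k) && (op m k == t))].

Definition is_subnear_ring (S : {set nlr}) : Prop :=
  nlr0 \in S /\
  (forall x y, x \in S -> y \in S -> nlr_add x (nlr_opp y) \in S) /\
  (forall x y, x \in S -> y \in S -> nlr_mul x y \in S).

Definition is_boolean (S : {set nlr}) : Prop :=
  forall x, x \in S -> nlr_mul x x = x.

End NearLoopRing.

(* Main.v *)
Require Import Defs.
From mathcomp Require Import all_boot.
From HB Require Import structures.

HB.instance Definition _ := Monoid.isComLaw.Build bool false z2add addbA addbC addFb.

Theorem theorem3p3p4 (T : finType) (op : T -> T -> T) (e : T) :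
  is_loop op e ->
  exists S : {set nlr T},
    is_subnear_ring op S /\ S != [set nlr0 T] /\ is_boolean op S.
Proof.
move=> [Hid _].
have Hee : op e e = e by case: (Hid e).
pose d : nlr T := [ffun z => z == e].
have d0 : d != nlr0 T.
  apply/eqP => /(congr1 (fun f : nlr T => f e)); rewrite !ffunE eqxx //.
have m0x : forall y, nlr_mul op (nlr0 T) y = nlr0 T.
  move=> y; apply/ffunP => z; rewrite !ffunE big_pred0 // => m; by rewrite ffunE.
have mx0 : forall x, nlr_mul op x (nlr0 T) = nlr0 T.
  move=> x; apply/ffunP => z; rewrite !ffunE; apply: (big_ind (fun b => b = false)) => //.
    by move=> a b -> ->.
  by move=> m _; rewrite big_pred0 // => k; rewrite ffunE.
have mdd : nlr_mul op d d = d.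
  apply/ffunP => z; rewrite !ffunE.
  rewrite (eq_bigl (fun m => m == e)); last by move=> m; rewrite ffunE.
  rewrite big_pred1_eq.
  rewrite (eq_bigl (fun m => m == e)); last by move=> m; rewrite ffunE.
  by rewrite big_pred1_eq /z2mul !ffunE eqxx Hee eq_sym.
have a0x : forall y, nlr_add (nlr0 T) (nlr_opp y) = y.
  by move=> y; apply/ffunP => z; rewrite !ffunE.
have ax0 : forall y, nlr_add y (nlr_opp (nlr0 T)) = y.
  by move=> y; apply/ffunP => z; rewrite !ffunE /z2add addbF.
have axx : forall y, nlr_add y (nlr_opp y) = nlr0 T.
  by move=> y; apply/ffunP => z; rewrite !ffunE /z2add addbb.
exists [set nlr0 T; d]; split; [split; [|split]|split].
- by rewrite !inE eqxx.
- move=> x y; rewrite !inE => /orP[]/eqP-> /orP[]/eqP->;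
    by rewrite ?a0x ?ax0 ?axx !eqxx ?orbT.
- move=> x y; rewrite !inE => /orP[]/eqP-> /orP[]/eqP->;
    by rewrite ?m0x ?mx0 ?mdd !eqxx ?orbT.
- apply/negP => /eqP/setP/(_ d); rewrite !inE eqxx orbT => /esym/eqP.
  by move/eqP: d0.
- move=> x; rewrite !inE => /orP[]/eqP->; by rewrite ?m0x ?mdd.
Qed.
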